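(* Let $F$ be an infinite field, let $d$ be a positive integer, and assume that either the characteristic of $F$ does not divide $d$, or $d$ is a prime number equal to the characteristic of $F$. Then every homogeneous form $f(a_1,\dots,a_n)$ of degree $d$ in $n$ variables over $F$ has a finite linearization: there exist a positive integer $m$ and matrices $X_1,\dots,X_n\in M_m(F)$ such that $$(a_1X_1+\dots+a_nX_n)^d=f(a_1,\dots,a_n)\cdot I_m\quad\text{for all } a_1,\dots,a_n\in F.$$
   Context: Equivalently, the Clifford algebra $C_f=F\langle x_1,\dots,x_n : (a_1x_1+\dots+a_nx_n)^d=f(a_1,\dots,a_n)\ \forall a_1,\dots,a_n\in F\rangle$ has a homomorphic image inside a matrix algebra of finite degree over $F$. *)

(* Defs.v *)
From mathcomp Require Import all_boot all_algebra.
From mathcomp Require Export mpoly.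
Set Implicit Arguments. Unset Strict Implicit. Unset Printing Implicit Defensive.
Import GRing.Theory.
Local Open Scope ring_scope.

Definition infinite_field (F : fieldType) : Prop :=
  forall s : seq F, exists x : F, x \notin s.

(* Main.v *)
Require Import Defs.
From mathcomp Require Import all_boot all_algebra.
From mathcomp Require Import mpoly.
From mathcomp Require Import all_field.
From mathcomp Require Import ring zify mxtens.
From Stdlib Require Import Lia.
Set Implicit Arguments. Unset Strict Implicit. Unset Printing Implicit Defensive.
Import GRing.Theory.
Local Open Scope ring_scope.

Section QBin.
Variable R : pzRingType.
Fixpoint cq (q : R) (n k : nat) : R :=
  match n, k with
  | 0, 0 => 1
  | 0, _ => 0
  | n'.+1, 0 => 1
  | n'.+1, k'.+1 => cq q n' k'.+1 + q ^+ (n' - k') * cq q n' k'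
  end.

Lemma cq_n0 q n : cq q n 0 = 1. Proof. by case: n. Qed.
Lemma cq_gt q n k : (n < k)%N -> cq q n k = 0.
Proof.
elim: n k => [|n IH] [|k] //= lt; rewrite !IH ?mulr0 ?addr0 //; lia.
Qed.
Lemma cq_nn q n : cq q n n = 1.
Proof. by elim: n => //= n IH; rewrite cq_gt // IH subnn expr0 mulr1 add0r. Qed.
End QBin.

Lemma cq_morph (R1 R2 : pzRingType) (phi : R1 -> R2) :
  phi 0 = 0 -> phi 1 = 1 -> {morph phi : x y / x + y} -> {morph phi : x y / x * y} ->
  forall q n k, phi (cq q n k) = cq (phi q) n k.
Proof.
move=> h0 h1 hD hM q; have hX e : phi (q ^+ e) = phi q ^+ e.
  by elim: e => [|e IH]; rewrite ?expr0 ?h1 // !exprS hM IH.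
elim=> [|n IH] [|k] //=; by rewrite hD hM hX !IH.
Qed.

Lemma cq_ratio (R : comPzRingType) (q : R) n k :
  (1 - q ^+ k.+1) * cq q n k.+1 = (1 - q ^+ (n - k)) * cq q n k.
Proof.
elim: n k => [|n IH] k.
  by rewrite /= sub0n expr0 subrr !mul0r; case: k => [|k] /=; rewrite mulr0.
case: k => [|j].
  rewrite /= subn0 cq_n0 mulr1 subn0 mulrDr IH subn0 cq_n0 mulr1 exprS.
  rewrite !exprS expr0; ring.
case: (ltnP j n) => hj; last first.
  rewrite (@cq_gt _ q n.+1 j.+2) ?mulr0; last by lia.
  by rewrite (_ : (n.+1 - j.+1 = 0)%N) ?expr0 ?subrr ?mul0r //; lia.
have := IH j.+1; have := IH j.
rewrite (_ : cq q n.+1 j.+2 = cq q n j.+2 + q ^+ (n - j.+1) * cq q n j.+1) //.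
rewrite (_ : cq q n.+1 j.+1 = cq q n j.+1 + q ^+ (n - j) * cq q n j) //.
rewrite subSS.
have [e he] : exists e, n = (j + e.+1)%N by exists (n - j.+1)%N; lia.
rewrite he (_ : (j + e.+1 - j.+1 = e)%N); last lia.
rewrite (_ : (j + e.+1 - j = e.+1)%N); last lia.
set a := cq q _ j.+1; set b := cq q _ j; set A := cq q _ j.+2.
move=> h1 h2.
rewrite mulrDr h2 mulrDr.
have -> : (1 - q ^+ e.+1) * (q ^+ e.+1 * b) = q ^+ e.+1 * ((1 - q ^+ e.+1) * b) by ring.
rewrite -h1 !exprS; ring.
Qed.

Lemma cq_prim (K : idomainType) (w : K) d : d.-primitive_root w ->
  forall j, (0 < j < d)%N -> cq w d j = 0.
Proof.
move=> pw; elim=> [//|j IH] hj.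
have := cq_ratio w d j.
have -> : (1 - w ^+ (d - j)) * cq w d j = 0.
  case: j IH hj => [|j] IH hj; first by rewrite subn0 prim_expr_order // subrr mul0r.
  by rewrite IH ?mulr0 //; lia.
move/eqP; rewrite mulf_eq0 subr_eq0 => /orP[|/eqP //].
rewrite eq_sym -(prim_order_dvd pw) => /dvdn_leq; lia.
Qed.

Section Expand.
Variable T : pzRingType.
Variables u v w : T.
Hypotheses (hwu : w * u = u * w) (hwv : w * v = v * w) (hvu : v * u = w * (u * v)).

Lemma vpow_u m : v ^+ m * u = w ^+ m * (u * v ^+ m).
Proof.
elim: m => [|m IH]; first by rewrite !expr0 !mul1r !mulr1.
by rewrite exprSr -mulrA hvu mulrA -(commrX m hwv) -mulrA (mulrA (v ^+ m)) IH exprS !mulrA.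
Qed.

Lemma cq_comm x : GRing.comm w x -> forall n k, GRing.comm x (cq w n k).
Proof.
move=> hx; elim=> [|n IH] [|k] /=; try exact: commr1; try exact: commr0.
apply: commrD; first exact: IH.
by apply: commrM; [apply: commrX; apply: commr_sym|apply: IH].
Qed.

Lemma expand n : (u + v) ^+ n =
  \sum_(j < n.+1) cq w n j * (u ^+ j * v ^+ (n - j)).
Proof.
elim: n => [|n IH]; first by rewrite big_ord1 /= !expr0 !mulr1.
have e1 : \sum_(i < n.+1) cq w n i * (u ^+ i * v ^+ (n - i)) * u =
  \sum_(i < n.+1) w ^+ (n - i) * cq w n i * (u ^+ i.+1 * v ^+ (n - i)).
  apply: eq_bigr => i _.
  rewrite -!mulrA vpow_u.
  have c1 : GRing.comm (u ^+ i) (w ^+ (n - i)) := commrX (n - i) (commr_sym (commrX i hwu)).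
  have c2 : GRing.comm (cq w n i) (w ^+ (n - i)) by apply: commrX; apply: commr_sym; apply: cq_comm; exact: commr_refl.
  by rewrite !mulrA -(mulrA _ (u ^+ i)) c1 mulrA c2 exprSr !mulrA.
have e2 : \sum_(i < n.+1) cq w n i * (u ^+ i * v ^+ (n - i)) * v =
  v ^+ n.+1 + \sum_(i < n.+1) cq w n i.+1 * (u ^+ i.+1 * v ^+ (n - i)).
  rewrite big_ord_recl [in RHS]big_ord_recr /= cq_n0 cq_gt // mul0r addr0.
  rewrite subn0 expr0 !mul1r -exprSr; congr (_ + _); apply: eq_bigr => i _.
  by rewrite /bump /= add1n -!mulrA -exprSr subnSK.
rewrite exprSr IH mulrDr !mulr_suml e1 e2 [RHS]big_ord_recl cq_n0 expr0 mul1r subn0.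
have e3 : forall i : 'I_n.+1, cq w n.+1 (bump 0 i) * (u ^+ bump 0 i * v ^+ (n.+1 - bump 0 i))
  = cq w n i.+1 * (u ^+ i.+1 * v ^+ (n - i)) + w ^+ (n - i) * cq w n i * (u ^+ i.+1 * v ^+ (n - i)).
  by move=> i; rewrite /bump /= !add0n add1n subSS mulrDl.
rewrite (eq_bigr _ (fun i _ => e3 i)) big_split /=.
by rewrite mul1r [LHS]addrC -addrA.
Qed.
End Expand.

Lemma expand_d (T : pzRingType) (u v w : T) d :
  w * u = u * w -> w * v = v * w -> v * u = w * (u * v) ->
  (forall j, (0 < j < d.+1)%N -> cq w d.+1 j = 0) ->
  (u + v) ^+ d.+1 = u ^+ d.+1 + v ^+ d.+1.
Proof.
move=> h1 h2 h3 h0; rewrite (expand h1 h2 h3) big_ord_recl big_ord_recr.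
rewrite big1 ?add0r; last first.
  move=> i _; rewrite h0 ?mul0r //; case: i => /= i; rewrite /bump /=; lia.
rewrite cq_n0 /= cq_nn subn0 subnn !expr0 !mul1r !add0n cq_gt // !add0r mul1r /bump /= add1n subnn expr0 mulr1 addrC.
done.
Qed.

Local Notation pZtoC := (map_poly (intr : int -> algC)).

Lemma Phi_dvd_cq d j : (0 < j < d)%N ->
  exists qq : {poly int}, cq ('X : {poly int}) d j = qq * 'Phi_d.
Proof.
move=> hj; have d_gt0 : (0 < d)%N by lia.
have [z pz] := C_prim_root_exists d_gt0.
have mon := Cyclotomic_monic d.
set c := cq 'X d j.
have Ec := Pdiv.RingMonic.rdivp_eq mon c.
exists (Pdiv.Ring.rdivp c 'Phi_d).
suff r0 : Pdiv.Ring.rmodp c 'Phi_d = 0 by rewrite {1}Ec r0 addr0.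
have ltr := Pdiv.Ring.ltn_rmodpN0 c (monic_neq0 mon).
have hC : pZtoC c = cq 'X d j.
  rewrite /c (@cq_morph _ _ pZtoC) ?map_polyX //; [exact: rmorph0|exact: rmorph1|exact: rmorphD|exact: rmorphM].
have dv : pZtoC 'Phi_d %| pZtoC c.
  rewrite (Cintr_Cyclotomic pz) hC /cyclotomic.
  have -> : \prod_(k < d | coprime k d) ('X - (z ^+ k)%:P) =
    \prod_(x <- [seq z ^+ (val k) | k : 'I_d in [pred k : 'I_d | coprime k d]]) ('X - x%:P).
    by rewrite big_image; apply: eq_bigl => k; rewrite inE.
  apply: uniq_roots_dvdp.
    apply/allP => x /imageP [k hk ->]; rewrite inE /= in hk.
    have pzk : d.-primitive_root (z ^+ k) by rewrite prim_root_exp_coprime.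
    rewrite /root (@cq_morph _ _ (fun p : {poly algC} => p.[z ^+ k])); last first.
    - by move=> p q; rewrite hornerM.
    - by move=> p q; rewrite hornerD.
    - by rewrite hornerC.
    - by rewrite horner0.
    by rewrite hornerX cq_prim.
  rewrite uniq_rootsE map_inj_in_uniq ?enum_uniq // => x y _ _ /eqP.
  by rewrite (eq_prim_root_expr pz) !modn_small ?ltn_ord // => /eqP; exact: val_inj.
have dvr : pZtoC 'Phi_d %| pZtoC (Pdiv.Ring.rmodp c 'Phi_d).
  by move: dv; rewrite {1}Ec rmorphD rmorphM /= dvdp_addr // dvdp_mull.
apply: (@map_inj_poly _ _ (intr : int -> algC)); first exact: intr_inj.
  by rewrite rmorph0.
apply/eqP; apply: contraTT ltr; rewrite rmorph0 => nz.
have := dvdp_leq nz dvr; rewrite !size_map_inj_poly //; try exact: intr_inj; by rewrite -leqNgt.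
Qed.

Lemma root_mx (F : fieldType) d : (0 < d)%N ->
  exists r' (C : 'M[F]_r'.+1), C ^+ d = 1 /\
    forall j, (0 < j < d)%N -> cq C d j = 0.
Proof.
move=> d_gt0.
pose p := map_poly (intr : int -> F) 'Phi_d.
have monp : p \is monic by rewrite /p monic_map // Cyclotomic_monic.
have szp : (1 < size p)%N.
  rewrite /p size_map_poly_id0 ?size_Cyclotomic ?ltnS ?totient_gt0 //.
  by rewrite (monicP (Cyclotomic_monic d)) rmorph1 oner_eq0.
have [r' [C hC]] : exists r' (C : 'M[F]_r'.+1), horner_mx C p = 0.
  have gen : forall k (A : 'M[F]_k), char_poly A = p -> (0 < k)%N ->
      exists r' (C : 'M[F]_r'.+1), horner_mx C p = 0.
    case=> [//|k] A hA _; exists k, A; by rewrite -hA Cayley_Hamilton.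
  apply: (gen _ (companionmx p)); first exact: companionmxK.
  by rewrite -subn1 subn_gt0.
have hcq : forall j, cq C d j = horner_mx C (map_poly intr (cq ('X : {poly int}) d j)).
  move=> j; rewrite (@cq_morph _ _ (map_poly intr)); first last.
  - exact: rmorphM.
  - exact: rmorphD.
  - exact: rmorph1.
  - exact: rmorph0.
  rewrite map_polyX (@cq_morph _ _ (horner_mx C)) ?horner_mx_X //.
  - exact: rmorph0.
  - exact: rmorph1.
  - exact: rmorphD.
  - exact: rmorphM.
exists r', C; split.
  have := prod_Cyclotomic d_gt0.
  have hd : d \in divisors d by rewrite -dvdn_divisors.
  rewrite (big_rem d hd) => /(congr1 (map_poly (intr : int -> F))).
  rewrite rmorphM rmorphB rmorph1 /= map_polyXn => /(congr1 (horner_mx C)).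
  rewrite rmorphM -/p. set P := (X in X * _ = _ -> _). have -> : P = 0 by exact: hC.
  rewrite mul0r rmorphB rmorph1 rmorphXn /= horner_mx_X => /esym.
  by move/eqP; rewrite subr_eq0 => /eqP.
move=> j hj; have [qq hq] := Phi_dvd_cq hj.
by rewrite hcq hq rmorphM rmorphM /= -/p hC mulr0.
Qed.

Section Tens.
Variable F : fieldType.

Lemma tens_scalar m p (a b : F) :
  (a%:M : 'M[F]_m) *t (b%:M : 'M[F]_p) = (a * b)%:M.
Proof.
apply/matrixP => i j.
case: (mxtens_indexP i) => i1 i2; case: (mxtens_indexP j) => j1 j2.
rewrite tensmxE !mxE.
have -> : (mxtens_index (i1, i2) == mxtens_index (j1, j2)) = (i1 == j1) && (i2 == j2).
  apply/eqP/andP => [/(can_inj (@mxtens_indexK _ _)) [-> ->] // | [/eqP -> /eqP ->] //].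
by case: (i1 == j1); case: (i2 == j2); rewrite ?mulr1n ?mulr0n ?mulr0 ?mul0r.
Qed.

Lemma tens_exp m p (A : 'M[F]_m) (B : 'M[F]_p) k :
  (A *t B) ^+ k = (A ^+ k) *t (B ^+ k).
Proof.
elim: k => [|k IH]; first by rewrite !expr0 tens_scalar mulr1.
by rewrite !exprS IH -!mulmxE tensmx_mul.
Qed.

Lemma tensDl m n p q (A1 A2 : 'M[F]_(m, n)) (B : 'M[F]_(p, q)) :
  (A1 + A2) *t B = A1 *t B + A2 *t B.
Proof. by apply/matrixP => i j; rewrite !mxE mulrDl. Qed.

Lemma tensDr m n p q (A : 'M[F]_(m, n)) (B1 B2 : 'M[F]_(p, q)) :
  A *t (B1 + B2) = A *t B1 + A *t B2.
Proof. by apply/matrixP => i j; rewrite !mxE mulrDr. Qed.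

Lemma tens_suml k m n p q (a : 'I_k -> F) (A : 'I_k -> 'M[F]_(m, n)) (B : 'M[F]_(p, q)) :
  \sum_i a i *: (A i *t B) = (\sum_i a i *: A i) *t B.
Proof.
apply/matrixP => i j; rewrite summxE [RHS]mxE summxE mulr_suml; apply: eq_bigr => l _.
by rewrite !mxE mulrA.
Qed.

Lemma tens_sumr k m n p q (a : 'I_k -> F) (A : 'I_k -> 'M[F]_(m, n)) (B : 'M[F]_(p, q)) :
  \sum_i a i *: (B *t A i) = B *t (\sum_i a i *: A i).
Proof.
apply/matrixP => i j; rewrite summxE [RHS]mxE summxE mulr_sumr; apply: eq_bigr => l _.
by rewrite !mxE mulrCA.
Qed.

Section Wsh.
Variable d' : nat.
Local Notation d := d'.+1.

Definition Wsh (lam : 'I_d -> F) : 'M[F]_d :=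
  \matrix_(i, j) ((((i : nat) == ((j : nat) + 1) %% d)%N)%:R * lam j).

Lemma Wsh_exp lam k : (Wsh lam) ^+ k =
  \matrix_(i, j) ((((i : nat) == ((j : nat) + k) %% d)%N)%:R * \prod_(t < k) lam (inZp ((j : nat) + t))).
Proof.
elim: k => [|k IH].
  apply/matrixP => i j; rewrite expr0 !mxE big_ord0 mulr1 addn0 modn_small //.
apply/matrixP => i j; rewrite exprS IH -mulmxE !mxE.
rewrite (bigD1 (inZp ((j : nat) + k))) //= big1 ?addr0; last first.
  move=> l /negbTE hl; rewrite !mxE.
  have -> : ((l : nat) == ((j : nat) + k) %% d)%N = false.
    by apply/negbTE; apply: contraFN hl => /eqP h; apply/eqP/val_inj.
  by rewrite mul0r mulr0.
rewrite !mxE eqxx mul1r big_ord_recr /= modnDml -addnA addn1.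
by rewrite -mulrA [lam _ * _]mulrC.
Qed.

Lemma Wsh_d lam : (Wsh lam) ^+ d = (\prod_t lam t)%:M.
Proof.
rewrite Wsh_exp; apply/matrixP => i j; rewrite !mxE modnDr modn_small //.
rewrite -val_eqE /=; case: (i == j :> nat); rewrite ?mul0r ?mulr0n // mul1r mulr1n.
symmetry; apply: (reindex_inj (h := fun t : 'I_d => inZp ((j : nat) + t))).
move=> x y /(congr1 val) /= /eqP; rewrite eqn_modDl !modn_small //.
by move/eqP/val_inj.
Qed.
End Wsh.

Lemma tens_sum k m n p q (A : 'I_k -> 'M[F]_(m, n)) (B : 'M[F]_(p, q)) :
  \sum_i (A i *t B) = (\sum_i A i) *t B.
Proof.
apply/matrixP => i j; rewrite summxE [RHS]mxE summxE mulr_suml; apply: eq_bigr => l _.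
by rewrite !mxE.
Qed.

Lemma tens_sum_entry k m n p q (A : 'I_k -> 'M[F]_(m, n)) (B : 'I_k -> 'M[F]_(p, q)) i1 i2 j1 j2 :
  (\sum_l (A l *t B l)) (mxtens_index (i1, i2)) (mxtens_index (j1, j2)) =
  \sum_l A l i1 j1 * B l i2 j2.
Proof. by rewrite summxE; apply: eq_bigr => l _; rewrite tensmxE. Qed.

Lemma delta_mulE m n (j : 'I_m) (M : 'M[F]_(m, n)) i k :
  (delta_mx j j *m M) i k = (i == j)%:R * M j k.
Proof.
rewrite mxE (bigD1 j) //= big1 ?addr0 => [|l /negbTE hl]; rewrite !mxE ?eqxx ?hl.
  by rewrite andbT.
by rewrite andbF mul0r.
Qed.

Lemma mul_deltaE m n (j : 'I_n) (M : 'M[F]_(m, n)) i k :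
  (M *m delta_mx j j) i k = M i j * (j == k)%:R.
Proof.
rewrite mxE (bigD1 j) //= big1 ?addr0 => [|l /negbTE hl].
  by rewrite !mxE eqxx /= eq_sym.
by rewrite !mxE hl /= mulr0.
Qed.

Lemma sum_pick k (i : 'I_k) (f : 'I_k -> F) : \sum_j (i == j)%:R * f j = f i.
Proof.
rewrite (bigD1 i) //= eqxx mul1r big1 ?addr0 // => j hj.
by rewrite eq_sym (negbTE hj) mul0r.
Qed.

Section CS.
Variables d' r' : nat.
Local Notation d := d'.+1.
Local Notation r := r'.+1.
Variable C : 'M[F]_r.
Hypothesis hCd : C ^+ d = 1.

Definition Sd : 'M[F]_d := Wsh (fun _ => 1).
Definition Bm : 'M[F]_(d * r) := Sd *t (1%:M : 'M[F]_r).
Definition Am : 'M[F]_(d * r) := \sum_(j < d) (delta_mx j j *t C ^+ j).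
Definition Om : 'M[F]_(d * r) := (1%:M : 'M[F]_d) *t C.

Lemma OmA : Om * Am = Am * Om.
Proof.
rewrite -!mulmxE /Om /Am mulmx_sumr mulmx_suml; apply: eq_bigr => j _.
by rewrite !tensmx_mul mul1mx mulmx1 !mulmxE -exprS -exprSr.
Qed.

Lemma OmB : Om * Bm = Bm * Om.
Proof. by rewrite -!mulmxE /Om /Bm !tensmx_mul mul1mx mulmx1 mul1mx mulmx1. Qed.

Lemma Bd : Bm ^+ d = 1.
Proof.
rewrite /Bm tens_exp /Sd Wsh_d big1 // expr1n tens_scalar mulr1.
done.
Qed.

Lemma Ad : Am ^+ d = 1.
Proof.
have h k : Am ^+ k = \sum_(j < d) (delta_mx j j *t C ^+ (j * k)).
  elim: k => [|k IH].
    rewrite expr0 (eq_bigr (fun j => delta_mx j j *t 1%:M)); last first.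
      by move=> j _; rewrite muln0 expr0.
    by rewrite tens_sum -mx1_sum_delta tens_scalar mulr1.
  rewrite exprSr IH -mulmxE /Am mulmx_suml; apply: eq_bigr => j _.
  rewrite mulmx_sumr (bigD1 j) //= big1 ?addr0.
    by rewrite tensmx_mul mul_delta_mx mulmxE -exprD [(j * k.+1)%N]mulnS [(j + _)%N]addnC.
  move=> l hl; rewrite tensmx_mul mul_delta_mx_cond eq_sym (negbTE hl) mulr0n.
  exact: tens0mx.
rewrite h (eq_bigr (fun j => delta_mx j j *t 1%:M)); last first.
  by move=> j _; rewrite [(j * d)%N]mulnC exprM hCd expr1n.
by rewrite tens_sum -mx1_sum_delta tens_scalar mulr1.
Qed.

Lemma AB : Am * Bm = Om * (Bm * Am).
Proof.
rewrite -!mulmxE /Am /Bm /Om mulmx_suml mulmx_sumr mulmx_sumr.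
rewrite (eq_bigr (fun j : 'I_d => (delta_mx j j *m Sd) *t C ^+ j)); last first.
  by move=> j _; rewrite tensmx_mul mulmx1.
rewrite [RHS](eq_bigr (fun j : 'I_d => (Sd *m delta_mx j j) *t C ^+ j.+1)); last first.
  by move=> j _; rewrite !tensmx_mul !mul1mx exprS -mulmxE.
apply/matrixP => i j.
case: (mxtens_indexP i) => i1 i2; case: (mxtens_indexP j) => j1 j2.
rewrite !tens_sum_entry.
rewrite [LHS](eq_bigr (fun l => (i1 == l)%:R * (Sd l j1 * (C ^+ l) i2 j2))); last first.
  by move=> l _; rewrite delta_mulE mulrA.
rewrite sum_pick.
rewrite [RHS](eq_bigr (fun l => (j1 == l)%:R * (Sd i1 l * (C ^+ l.+1) i2 j2))); last first.
  by move=> l _; rewrite mul_deltaE eq_sym mulrCA mulrA.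
rewrite sum_pick /Sd /Wsh !mxE mulr1.
have hE : forall b : bool, (b -> (C ^+ i1) i2 j2 = (C ^+ j1.+1) i2 j2) ->
  b%:R * (C ^+ i1) i2 j2 = b%:R * (C ^+ j1.+1) i2 j2 by case => [h|_]; rewrite ?h // !mul0r.
apply: hE => /eqP ->; by rewrite expr_mod ?hCd // addn1.
Qed.

End CS.
End Tens.

Lemma scalar_exp (F : fieldType) m (a : F) k : (a%:M : 'M[F]_m) ^+ k = (a ^+ k)%:M.
Proof.
elim: k => [|k IH]; first by rewrite !expr0.
by rewrite !exprS IH -mulmxE -scalar_mxM.
Qed.

Section Lin.
Variables (F : fieldType) (n d' : nat).
Local Notation d := d'.+1.

Definition lin (g : ('I_n -> F) -> F) := exists m (X : 'I_n -> 'M[F]_m),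
  (0 < m)%N /\ forall a, (\sum_i a i *: X i) ^+ d = (g a)%:M.

Lemma lin_ext g h : g =1 h -> lin g -> lin h.
Proof. by move=> e [m [X [hm hX]]]; exists m, X; split => // a; rewrite hX e. Qed.

Lemma lin0 : lin (fun _ => 0).
Proof.
exists 1%N, (fun _ => 0); split => // a.
rewrite big1 => [|i _]; last by rewrite scaler0.
by rewrite expr0n /=; apply/matrixP => i j; rewrite !mxE mul0rn.
Qed.

Lemma lin_add g h : lin g -> lin h -> lin (fun a => g a + h a).
Proof.
move=> [m1 [X [hm1 hX]]] [m2 [Y [hm2 hY]]].
have [r' [C [hCd hCq]]] := @root_mx F d (ltn0Sn d').
pose Z i := ((X i *t (1%:M : 'M[F]_m2)) *t (@Am F d' r' C)) + (((1%:M : 'M[F]_m1) *t Y i) *t (@Bm F d' r')).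
exists ((m1 * m2) * (d * r'.+1))%N, Z; split.
  by rewrite !muln_gt0 hm1 hm2.
move=> a.
have -> : \sum_i a i *: Z i =
   (((1%:M : 'M[F]_m1) *t (\sum_i a i *: Y i)) *t (@Bm F d' r')) +
   (((\sum_i a i *: X i) *t (1%:M : 'M[F]_m2)) *t (@Am F d' r' C)).
  rewrite /Z (eq_bigr (fun i => a i *: ((X i *t 1%:M) *t (@Am F d' r' C)) + a i *: ((1%:M *t Y i) *t (@Bm F d' r')))); last first.
    by move=> i _; rewrite scalerDr.
  by rewrite big_split /= addrC !tens_suml tens_sumr.
set u := (_ *t (@Bm F d' r')); set v := (_ *t (@Am F d' r' C)).
pose w := (1%:M : 'M[F]_(m1 * m2)) *t (@Om F d' r' C).
have phi0 : (1%:M : 'M[F]_(m1 * m2)) *t (0 : 'M[F]_(d * r'.+1)) = 0 by exact: tensmx0.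
have eOB : (@Om F d' r' C) *m (@Bm F d' r') = (@Bm F d' r') *m (@Om F d' r' C).
  by rewrite !mulmxE OmB.
have eOA : (@Om F d' r' C) *m (@Am F d' r' C) = (@Am F d' r' C) *m (@Om F d' r' C).
  by rewrite !mulmxE OmA.
have eAB : (@Am F d' r' C) *m (@Bm F d' r') = (@Om F d' r' C) *m ((@Bm F d' r') *m (@Am F d' r' C)).
  by rewrite !mulmxE (AB hCd).
have hwu : w * u = u * w by rewrite /w /u -!mulmxE !tensmx_mul !mul1mx !mulmx1.
have hwv : w * v = v * w.
  by rewrite /w /v -!mulmxE !tensmx_mul !mul1mx !mulmx1 eOA.
have hvu : v * u = w * (u * v).
  by rewrite /w /u /v -!mulmxE !tensmx_mul !mul1mx !mulmx1 eAB.
have hphi : forall k (M : 'M[F]_k) q j, cq ((1%:M : 'M[F]_q) *t M) d j = 1%:M *t cq M d j.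
  move=> k M q j; symmetry; apply: (@cq_morph _ _ (fun N : 'M[F]_k => (1%:M : 'M[F]_q) *t N)).
  - exact: tensmx0.
  - by rewrite tens_scalar mulr1.
  - by move=> x y; rewrite tensDr.
  - by move=> x y /=; rewrite -!mulmxE tensmx_mul mul1mx.
rewrite (expand_d hwu hwv hvu); last first.
  by move=> j hj; rewrite /w /Om !hphi hCq // !tensmx0.
rewrite /u /v !tens_exp hX hY (Ad hCd) /Sd Wsh_d big1_eq !scalar_exp !expr1n.
rewrite !tens_scalar !mulr1 !mul1r.
by apply/matrixP => i j; rewrite !mxE mulrnDl addrC.
Qed.
Lemma prod_nseq (a : 'I_n -> F) k i : \prod_(x <- nseq k i) a x = a i ^+ k.
Proof. by elim: k => [|k IH]; rewrite ?big_nil ?expr0 // big_cons IH exprS. Qed.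

Lemma lin_mono (c : F) (mm : 'X_{1..n}) : mdeg mm = d ->
  lin (fun a => c * \prod_i a i ^+ mm i).
Proof.
rewrite mdegE => hdeg.
case: (pickP (fun _ : 'I_n => true)) => [i0 _|h0]; last first.
  by move: hdeg; rewrite big_pred0.
pose s := flatten [seq nseq (mm i) i | i <- enum 'I_n].
have hs : size s = d.
  rewrite /s size_flatten /shape -map_comp sumnE big_map -hdeg big_enum /=.
  by apply: eq_bigr => i _; rewrite size_nseq.
pose v (t : 'I_d) := nth i0 s t.
pose w (t : 'I_d) := if t == ord0 then c else 1.
exists d, (fun i => Wsh (fun t => (v t == i)%:R * w t)); split => // a.
have -> : \sum_i a i *: Wsh (fun t => (v t == i)%:R * w t) = Wsh (fun t => a (v t) * w t).
  apply/matrixP => i j; rewrite summxE [RHS]mxE.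
  rewrite (eq_bigr (fun l => (v j == l)%:R * ((((i : nat) == ((j : nat) + 1) %% d)%N)%:R * (a l * w j)))).
    by rewrite sum_pick.
  by move=> l _; rewrite !mxE; case: (v j == l); rewrite ?mulr0 ?mul0r ?mulr0 ?mul1r ?mulr1 // mulrCA mulrA.
rewrite Wsh_d big_split /= mulrC; congr (_ * _)%:M.
  rewrite (bigD1 ord0) //= big1 ?mulr1 // => t /negbTE ht; by rewrite /w ht.
have -> : \prod_(t < d) a (v t) = \prod_(x <- s) a x.
  rewrite (big_nth i0) big_mkord hs; by [].
rewrite /s big_flatten /= big_map big_enum /=.
by apply: eq_bigr => i _; rewrite prod_nseq.
Qed.
End Lin.

Unset Implicit Arguments.
Theorem mainTheorem1 (F : fieldType) (d n : nat) (f : {mpoly F[n]}) :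
  infinite_field F -> (0 < d)%N ->
  ((forall p : nat, p \in [pchar F] -> ~~ (p %| d)%N) \/ (prime d /\ d \in [pchar F])) ->
  f \is d.-homog ->
  exists (m : nat) (X : 'I_n -> 'M[F]_m.+1),
    forall a : 'I_n -> F,
      (\sum_(i < n) a i *: X i) ^+ d = (f.@[a])%:M.
Proof.
move=> _ d_gt0 _; case: d d_gt0 => [//|d'] _ hom.
have gen : forall s : seq 'X_{1..n}, all (fun m => mdeg m == d'.+1) s ->
    lin d' (fun a : 'I_n -> F => \sum_(m <- s) f@_m * \prod_i a i ^+ m i).
  elim => [|m s IH] /=.
    by move=> _; apply: (lin_ext _ (@lin0 F n d')) => a; rewrite big_nil.
  case/andP => /eqP hm hs.
  by apply: (lin_ext _ (lin_add (lin_mono (f@_m) hm) (IH hs))) => a; rewrite big_cons.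
have : lin d' (fun a : 'I_n -> F => f.@[a]).
  apply: (lin_ext _ (gen (msupp f) _)); first by move=> a; rewrite mevalE.
  by move: hom; rewrite dhomogE.
case=> [[|m] [X [//= _ hX]]]; by exists m, X.
Qed.
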